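(* For each integer $r\ge1$, let $G_r=(K_2\cup(2r+1)K_1)\nabla(2r+1)K_1$ and $G'_r=(2r+1)K_1\nabla(2r+2)K_1\nabla K_1$, both of order $4r+4$. Then $LE(G_r)=LE(G'_r)=LE(K_{4r+4})=8r+6$ (both are $L$-borderenergetic), and neither $G_r$ nor $G'_r$ has the same Laplacian spectrum as $K_{4r+4}$.
   Context: All graphs are finite, simple and undirected. The Laplacian matrix of $G$ is $L(G)=D-A$ ($D$ degree matrix, $A$ adjacency matrix). For a graph $G$ on $n$ vertices with Laplacian eigenvalues $\mu_1,\dots,\mu_n$ and average degree $\overline d = 2|E(G)|/n$, the Laplacian energy is $LE(G)=\sum_{i=1}^n|\mu_i-\overline d|$. One has $LE(K_n)=2n-2$. A graph $G$ on $n$ vertices is $L$-borderenergetic if $LE(G)=LE(K_n)$. $K_m$ is the complete graph on $m$ vertices, $mG$ is the disjoint union of $m$ copies of $G$, $\cup$ is disjoint union, and the join $G_1\nabla G_2$ is obtained from $G_1\cup G_2$ by adding all edges between a vertex of $G_1$ and a vertex of $G_2$ (the join is associative). *)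

(* Defs.v *)
From HB Require Import structures.
From mathcomp Require Import all_boot all_order all_algebra all_field.
Set Implicit Arguments. Unset Strict Implicit. Unset Printing Implicit Defensive.
Import Order.TTheory GRing.Theory Num.Theory.
Local Open Scope ring_scope.

(* A graph: a finite vertex type with an adjacency relation.  All graphs
   built below are simple (symmetric, irreflexive adjacency). *)
Structure graph := Graph { vert :> finType; adj : rel vert }.
Arguments adj : clear implicits.

Definition K (m : nat) : graph := @Graph 'I_m (fun i j => i != j).

Definition copies (m : nat) (G : graph) : graph :=
  @Graph ('I_m * vert G)%type (fun x y => (x.1 == y.1) && adj G x.2 y.2).

Definition gunion (G1 G2 : graph) : graph :=
  @Graph (vert G1 + vert G2)%type (fun x y =>
    match x, y with
    | inl a, inl b => adj G1 a b
    | inr a, inr b => adj G2 a b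
    | _, _ => false
    end).

Definition gjoin (G1 G2 : graph) : graph :=
  @Graph (vert G1 + vert G2)%type (fun x y =>
    match x, y with
    | inl a, inl b => adj G1 a b
    | inr a, inr b => adj G2 a b
    | _, _ => true
    end).

Definition deg (G : graph) (v : G) : nat := #|[pred w | adj G v w]|.

Definition lap (G : graph) : 'M[algC]_#|G| :=
  \matrix_(i, j) ((if i == j then (deg (enum_val i))%:R else 0)
                  - (adj G (enum_val i) (enum_val j))%:R).

(* average degree 2|E|/n = (sum of degrees)/n *)
Definition avgdeg (G : graph) : algC :=
  (\sum_(v : G) deg v)%:R / #|G|%:R.

Definition lspec (G : graph) : seq algC :=
  sval (closed_field_poly_normal (char_poly (lap G))).

Definition LE (G : graph) : algC := \sum_(mu <- lspec G) `|mu - avgdeg G|.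

(* Main.v *)
Require Import Defs.
From HB Require Import structures.
From mathcomp Require Import all_boot all_order all_algebra all_field.
From mathcomp Require Import ring lra zify.
Set Implicit Arguments. Unset Strict Implicit. Unset Printing Implicit Defensive.
Import Order.TTheory GRing.Theory Num.Theory.
Local Open Scope ring_scope.

Section Gen.
Variable F : fieldType.

Lemma char_poly_conj n (P A : 'M[F]_n) : P \in unitmx ->
  char_poly (P *m A *m invmx P) = char_poly A.
Proof.
move=> uP; rewrite /char_poly /char_poly_mx.
have hPP : map_mx (@polyC F) P *m map_mx polyC (invmx P) = 1.
  by rewrite -map_mxM mulmxV // map_mx1.
have -> : 'X%:M - map_mx polyC (P *m A *m invmx P) =
   map_mx polyC P *m ('X%:M - map_mx polyC A) *m map_mx polyC (invmx P).
  rewrite !map_mxM mulmxBr mulmxBl mul_mx_scalar -scalemxAl -mul_mx_scalar.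
  by rewrite hPP mul1mx.
rewrite !det_mulmx mulrC mulrA -det_mulmx.
by rewrite -map_mxM mulVmx // map_mx1 det1 mul1r.
Qed.

Lemma geo_alg_sum k m (A : 'M[F]_(k + m)) (V : 'M[F]_(k, k + m)) a :
  row_free V -> V *m A = a *: V -> ('X - a%:P) ^+ k %| char_poly A.
Proof.
move=> /eqP rV VA.
set L := col_ebase V; set U := row_ebase V.
have uL : L \in unitmx by apply: col_ebase_unit.
have uU : U \in unitmx by apply: row_ebase_unit.
have eV := mulmx_ebase V; rewrite rV in eV; rewrite -/L -/U in eV; symmetry in eV.
set B := U *m A *m invmx U.
have hB : (pid_mx k : 'M_(k, k + m)) *m B = a *: pid_mx k.
  have : invmx L *m (V *m A) *m invmx U = invmx L *m (a *: V) *m invmx U by rewrite VA.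
  rewrite eV /B -!scalemxAr -scalemxAl !mulmxA !mulVmx // !mul1mx mulmxK //.
have eB : B = block_mx (a%:M) 0 (dlsubmx B) (drsubmx B).
  rewrite -{1}(submxK B); congr block_mx.
    have := hB; rewrite pid_mx_row -{1}(submxK B) block_mxEv mul_row_col mul0mx addr0.
    by rewrite scale_row_mx scaler0 mul1mx => /eq_row_mx [-> _]; rewrite scalemx1.
  have := hB; rewrite pid_mx_row -{1}(submxK B) block_mxEv mul_row_col mul0mx addr0.
  by rewrite scale_row_mx scaler0 mul1mx => /eq_row_mx [_ ->].
rewrite -(char_poly_conj A uU) -/B.
rewrite /char_poly /char_poly_mx eB (scalar_mx_block k m) map_block_mx.
rewrite opp_block_mx add_block_mx !(raddf0, subr0, sub0r) det_lblock.
rewrite map_scalar_mx -(raddfB (@scalar_mx _ k)) det_scalar; exact: dvdp_mulIl.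
Qed.

Lemma geo_alg n k (A : 'M[F]_n) (V : 'M[F]_(k, n)) a :
  row_free V -> V *m A = a *: V -> ('X - a%:P) ^+ k %| char_poly A.
Proof.
move=> rV; have kn : (k <= n)%N by rewrite -(eqP rV) rank_leq_col.
move: A V rV; rewrite -(subnKC kn) => A V; exact: geo_alg_sum.
Qed.

Lemma prodXsubC_perm (s t : seq F) :
  \prod_(z <- s) ('X - z%:P) = \prod_(z <- t) ('X - z%:P) -> perm_eq s t.
Proof.
elim: s t => [|a s IH] t.
  rewrite big_nil => e; have := congr1 (fun p : {poly F} => size p) e.
  rewrite /= size_poly1 size_prod_XsubC.
  by case: t e.
move=> e; have at_ : a \in t.
  by rewrite -root_prod_XsubC -e root_prod_XsubC mem_head.
have pt := perm_to_rem at_.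
move: e; rewrite (perm_big _ pt) !big_cons => /mulfI e.
rewrite (permPr pt) perm_cons; apply: IH; apply: e.
by rewrite polyXsubC_eq0.
Qed.

Definition mspec (l : seq (F * nat)) : seq F :=
  flatten [seq nseq p.2 p.1 | p <- l].

Lemma prod_nseq k (a : F) :
  \prod_(z <- nseq k a) ('X - z%:P) = ('X - a%:P) ^+ k.
Proof. by elim: k => [|k IH]; rewrite ?big_nil ?expr0 // big_cons IH exprS. Qed.

Lemma prod_mspec l :
  \prod_(z <- mspec l) ('X - z%:P) = \prod_(p <- l) ('X - p.1%:P) ^+ p.2.
Proof.
elim: l => [|p l IH]; first by rewrite /mspec /= !big_nil.
by rewrite /mspec /= big_cat -/(mspec l) IH big_cons prod_nseq.
Qed.

Lemma coprime_aux a k (l : seq (F * nat)) : a \notin map fst l ->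
  coprimep (('X - a%:P) ^+ k) (\prod_(p <- l) ('X - p.1%:P) ^+ p.2).
Proof.
elim: l => [|p l IH]; first by rewrite big_nil coprimep1.
rewrite /= inE negb_or => /andP [ne nl].
rewrite big_cons coprimepMr IH // andbT.
apply/coprimep_expl/coprimep_expr/coprimep_XsubC2.
by rewrite subr_eq0 eq_sym.
Qed.

Lemma char_spec n (A : 'M[F]_n) l : uniq (map fst l) ->
  (forall p, p \in l -> ('X - p.1%:P) ^+ p.2 %| char_poly A) ->
  size (mspec l) = n ->
  char_poly A = \prod_(z <- mspec l) ('X - z%:P).
Proof.
move=> ul hl sl.
have D : \prod_(p <- l) ('X - p.1%:P) ^+ p.2 %| char_poly A.
  elim: l ul hl {sl} => [|p l IH]; first by rewrite big_nil dvd1p.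
  move=> /= /andP [pl ul] hl; rewrite big_cons Gauss_dvdp ?coprime_aux //.
  apply/andP; split; first by apply: hl; rewrite mem_head.
  by apply: IH => // q ql; apply: hl; rewrite inE ql orbT.
have m1 : \prod_(z <- mspec l) ('X - z%:P) \is monic by apply: monic_prod_XsubC.
symmetry; apply/eqP. rewrite -(eqp_monic m1 (char_poly_monic A)).
rewrite prod_mspec -(dvdp_size_eqp D) -prod_mspec size_prod_XsubC sl.
by rewrite size_char_poly.
Qed.

End Gen.

Section GraphLemmas.
Variable G : graph.

Lemma sum_enum (g : G -> algC) :
  \sum_(i < #|G|) g (enum_val i) = \sum_(u : G) g u.
Proof.
rewrite (reindex (@enum_rank G)) /=; last first.
  by exists enum_val => x _; rewrite ?enum_rankK ?enum_valK.
by apply: eq_bigr => u _; rewrite enum_rankK.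
Qed.

Lemma degE (v : G) : (deg v)%:R = \sum_(u : G) (adj G v u)%:R :> algC.
Proof.
rewrite /deg -sum1_card natr_sum big_mkcond /=.
by apply: eq_bigr => u _; rewrite inE; case: adj.
Qed.

Definition isEig (f : G -> algC) (l : algC) :=
  forall w, (deg w)%:R * f w - \sum_(u : G) (adj G u w)%:R * f u = l * f w.

Lemma lap_entry f l : isEig f l -> forall j : 'I_#|G|,
  \sum_(i < #|G|) f (enum_val i) * lap G i j = l * f (enum_val j).
Proof.
move=> hf j; rewrite -hf.
under eq_bigr => i _ do rewrite mxE.
under eq_bigr => i _ do rewrite mulrBr.
rewrite sumrB (bigD1 j) //= eqxx big1 ?addr0; last first.
  by move=> i /negPf ->; rewrite mulr0.
rewrite (sum_enum (fun u => f u * (adj G u (enum_val j))%:R)) mulrC.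
by congr (_ - _); apply: eq_bigr => u _; rewrite mulrC.
Qed.

Lemma eig_rv f l : isEig f l ->
  (\row_j f (enum_val j)) *m lap G = l *: \row_j f (enum_val j).
Proof.
move=> hf; apply/rowP => j; rewrite !mxE -(lap_entry hf).
by apply: eq_bigr => i _; rewrite mxE.
Qed.

Lemma eig_div k (fs : 'I_k -> G -> algC) (xs : 'I_k -> G) l :
  (forall i, isEig (fs i) l) ->
  (forall i i' : 'I_k, (i < i')%N -> fs i (xs i') = 0) ->
  (forall i, fs i (xs i) != 0) ->
  ('X - l%:P) ^+ k %| char_poly (lap G).
Proof.
move=> he hx hnz.
pose V : 'M[algC]_(k, #|G|) := \matrix_(i, j) fs i (enum_val j).
pose W : 'M[algC]_(#|G|, k) :=
  \matrix_(j, i) ((enum_val j == xs i)%:R / fs i (xs i)).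
apply: (@geo_alg _ _ _ _ V).
  have VW : forall i i', (V *m W) i i' = fs i (xs i') / fs i' (xs i').
    move=> i i'; rewrite !mxE.
    under eq_bigr => j _ do rewrite !mxE.
    rewrite (sum_enum (fun u => fs i u * ((u == xs i')%:R / fs i' (xs i')))).
    rewrite (bigD1 (xs i')) //= eqxx mul1r big1 ?addr0 //.
    by move=> u /negPf ->; rewrite mul0r mulr0.
  have tr : is_trig_mx (V *m W).
    by apply/is_trig_mxP => i i' lt; rewrite VW hx // mul0r.
  have uVW : V *m W \in unitmx.
    rewrite unitmxE (det_trig tr) (eq_bigr (fun _ => 1)) ?big1_eq ?unitr1 //.
    by move=> i _; rewrite VW divff.
  rewrite /row_free eqn_leq rank_leq_row /=.
  by rewrite -{1}(mxrank_unit uVW) mxrankM_maxl.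
apply/matrixP => i j; rewrite !mxE -(lap_entry (he i)).
by apply: eq_bigr => j' _; rewrite mxE.
Qed.
Lemma isEigE f l : isEig f l <->
  forall w, (\sum_(u : G) (adj G w u)%:R) * f w
    - \sum_(u : G) (adj G u w)%:R * f u = l * f w.
Proof. by split => h w; have := h w; rewrite degE. Qed.

Definition symg := forall u v : G, adj G u v = adj G v u.

Lemma eig_ones : symg -> isEig (fun _ => 1) 0.
Proof.
move=> hs; apply/isEigE => w; rewrite mulr1 mul0r; apply/eqP; rewrite subr_eq0.
by apply/eqP; apply: eq_bigr => u _; rewrite mulr1 hs.
Qed.

Lemma eig_empty f : (forall u v : G, adj G u v = false) -> isEig f 0.
Proof.
move=> h; apply/isEigE => w; rewrite mul0r !big1 ?mul0r ?subr0 //.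
  by move=> u _; rewrite h mul0r.
by move=> u _; rewrite h.
Qed.

Lemma eig_scale f l c : isEig f l -> isEig (fun u => c * f u) l.
Proof.
move=> h w.
have e : \sum_u (adj G u w)%:R * (c * f u) = c * \sum_u (adj G u w)%:R * f u.
  by rewrite mulr_sumr; apply: eq_bigr => u _; rewrite mulrCA.
by rewrite e mulrCA -mulrBr h mulrCA.
Qed.

Lemma sum_e (x : G) : \sum_(u : G) (u == x)%:R = 1 :> algC.
Proof.
rewrite (bigD1 x) //= eqxx big1 ?addr0 //.
by move=> u /negPf ->.
Qed.

Lemma sum_tw (x y : G) : \sum_(u : G) ((u == x)%:R - (u == y)%:R) = 0 :> algC.
Proof. by rewrite sumrB !sum_e subrr. Qed.

End GraphLemmas.

Definition sumf (T1 T2 : Type) (f1 : T1 -> algC) (f2 : T2 -> algC) (x : T1 + T2) :=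
  match x with inl a => f1 a | inr b => f2 b end.

Lemma sum0f (T : finType) (g : T -> algC) : \sum_(i : T) 0 * g i = 0.
Proof. by rewrite big1 // => i _; rewrite mul0r. Qed.

Lemma sumf0 (T : finType) (g : T -> algC) : \sum_(i : T) g i * 0 = 0.
Proof. by rewrite big1 // => i _; rewrite mulr0. Qed.

Lemma sum1f (T : finType) (g : T -> algC) : \sum_(i : T) 1 * g i = \sum_i g i.
Proof. by apply: eq_bigr => i _; rewrite mul1r. Qed.

Lemma sum1 (T : finType) : \sum_(i : T) (1 : algC) = #|T|%:R.
Proof. by rewrite sumr_const. Qed.

Lemma sumc (T : finType) (c : algC) : \sum_(i : T) c = c * #|T|%:R.
Proof. by rewrite -sum1 mulr_sumr; apply: eq_bigr => i _; rewrite mulr1. Qed.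

Lemma eig_union (G1 G2 : graph) f1 f2 l :
  isEig f1 l -> isEig f2 l -> @isEig (gunion G1 G2) (sumf f1 f2) l.
Proof.
move=> /isEigE h1 /isEigE h2; apply/isEigE => -[a|b] /=;
  rewrite !big_sumType /=.
  by rewrite sum0f big1_eq !addr0 h1.
by rewrite sum0f big1_eq !add0r h2.
Qed.

Lemma eig_joinl (G1 G2 : graph) f l :
  isEig f l -> \sum_(u : G1) f u = 0 ->
  @isEig (gjoin G1 G2) (sumf f (fun _ => 0)) (l + #|G2|%:R).
Proof.
move=> /isEigE h1 s0; apply/isEigE => -[a|b] /=; rewrite !big_sumType /=.
  rewrite sumf0 sum1 addr0 mulrDl mulrDl -h1; ring.
by rewrite !sumf0 sum1f s0 !mulr0 !addr0 subr0.
Qed.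

Lemma eig_joinr (G1 G2 : graph) f l :
  isEig f l -> \sum_(u : G2) f u = 0 ->
  @isEig (gjoin G1 G2) (sumf (fun _ => 0) f) (l + #|G1|%:R).
Proof.
move=> /isEigE h1 s0; apply/isEigE => -[a|b] /=; rewrite !big_sumType /=.
  by rewrite !sumf0 sum1f s0 !mulr0 !addr0 subr0.
rewrite sumf0 sum1 add0r mulrDl mulrDl -h1; ring.
Qed.

Lemma eig_joinc (G1 G2 : graph) : symg G1 -> symg G2 ->
  @isEig (gjoin G1 G2) (sumf (fun _ => #|G2|%:R) (fun _ => - #|G1|%:R))
     (#|G1|%:R + #|G2|%:R).
Proof.
move=> s1 s2; apply/isEigE => -[a|b] /=; rewrite !big_sumType /= ?sum1.
  have e : \sum_(u : G1) (adj G1 u a)%:R * #|G2|%:R =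
      (\sum_(u : G1) (adj G1 a u)%:R) * #|G2|%:R :> algC.
    by rewrite mulr_suml; apply: eq_bigr => u _; rewrite s1.
  rewrite e sum1f sumc; ring.
have e : \sum_(u : G2) (adj G2 u b)%:R * - #|G1|%:R =
    (\sum_(u : G2) (adj G2 b u)%:R) * - #|G1|%:R :> algC.
  by rewrite mulr_suml; apply: eq_bigr => u _; rewrite s2.
rewrite e sum1f sumc; ring.
Qed.

Lemma eig_K m f : \sum_(u : K m) f u = 0 -> isEig f m%:R.
Proof.
move=> s0; apply/isEigE => w /=.
rewrite (bigD1 w) //= (bigD1 w (P := predT)) //= eqxx !add0r mul0r add0r.
have e1 : \sum_(i < m | i != w) (w != i)%:R = (m.-1)%:R :> algC.
  rewrite (eq_bigr (fun _ => 1)); last by move=> i; rewrite eq_sym => ->.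
  by rewrite sumr_const cardC1 card_ord.
have e2 : \sum_(i < m | i != w) (i != w)%:R * f i = - f w.
  rewrite (eq_bigr f); last by move=> i ->; rewrite mul1r.
  have := s0; rewrite (bigD1 w) //= => /eqP; rewrite addrC addr_eq0 => /eqP ->.
  by [].
rewrite e1 e2 opprK.
have hm : m = (m.-1).+1 by rewrite prednK // (leq_ltn_trans _ (ltn_ord w)).
by rewrite [in RHS]hm -addn1 natrD mulrDl mul1r.
Qed.

Lemma eig_zero (G : graph) l : @isEig G (fun _ => 0) l.
Proof. by move=> w; rewrite !mulr0 sumf0 subr0. Qed.

Lemma eig_eq (G : graph) (f : G -> algC) l l' : isEig f l -> l = l' -> isEig f l'.
Proof. by move=> h <-. Qed.

Lemma sum_sumf (T1 T2 : finType) (f1 : T1 -> algC) (f2 : T2 -> algC) :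
  \sum_(u : T1 + T2) sumf f1 f2 u = \sum_u f1 u + \sum_u f2 u.
Proof. by rewrite big_sumType. Qed.

Lemma sym_K m : symg (K m).
Proof. by move=> u v /=; rewrite eq_sym. Qed.

Lemma sym_copies m G : symg G -> symg (copies m G).
Proof. by move=> h u v /=; rewrite eq_sym h. Qed.

Lemma sym_union G1 G2 : symg G1 -> symg G2 -> symg (gunion G1 G2).
Proof. by move=> h1 h2 [a|b] [a'|b'] //=. Qed.

Lemma sym_join G1 G2 : symg G1 -> symg G2 -> symg (gjoin G1 G2).
Proof. by move=> h1 h2 [a|b] [a'|b'] //=. Qed.

Definition E m := copies m (K 1).

Lemma noadjE m (u v : E m) : adj (E m) u v = false.
Proof. by case: u v => a i [b j] /=; rewrite (ord1 i) (ord1 j) eqxx andbF. Qed.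

Lemma card_join G1 G2 : #|gjoin G1 G2| = (#|G1| + #|G2|)%N.
Proof. exact: card_sum. Qed.

Lemma card_union G1 G2 : #|gunion G1 G2| = (#|G1| + #|G2|)%N.
Proof. exact: card_sum. Qed.

Lemma card_E m : #|E m| = m.
Proof. by rewrite /E /= card_prod !card_ord muln1. Qed.

Lemma card_K m : #|K m| = m.
Proof. exact: card_ord. Qed.

Definition ev m (H : (0 < m)%N) (j : nat) : E m := (insubd (Ordinal H) j, ord0).

Lemma ev_eq m (H : (0 < m)%N) j j' : (j < m)%N -> (j' < m)%N ->
  (ev H j == ev H j') = (j == j').
Proof.
move=> hj hj'; rewrite /ev xpair_eqE eqxx andbT -val_eqE /= !val_insubd.
by rewrite hj hj'.
Qed.

Definition tw (T : eqType) (x y : T) : T -> algC := fun u => (u == x)%:R - (u == y)%:R.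

Lemma lspec_perm G s : char_poly (lap G) = \prod_(z <- s) ('X - z%:P) ->
  perm_eq (lspec G) s.
Proof.
rewrite /lspec; case: closed_field_poly_normal => t /= e h.
apply: prodXsubC_perm; rewrite -h.
by rewrite [in RHS]e (monicP (char_poly_monic _)) scale1r.
Qed.

Definition Gr r := gjoin (gunion (K 2) (E (2 * r + 1))) (E (2 * r + 1)).

Definition lGr r : seq (algC * nat) :=
  [:: (0, 1%N); ((4 * r + 4)%:R, 1%N); ((2 * r + 3)%:R, (2 * r + 1)%N);
      ((2 * r + 1)%:R, (2 * r + 1)%N)].

Lemma sym_Gr r : symg (Gr r).
Proof. by apply: sym_join; [apply: sym_union|]; do ?apply: sym_copies; apply: sym_K. Qed.

Lemma cardGr1 r : #|gunion (K 2) (E (2 * r + 1))| = (2 * r + 3)%N.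
Proof. by rewrite card_union card_K card_E; lia. Qed.

Lemma cardGr r : #|Gr r| = (4 * r + 4)%N.
Proof. by rewrite card_join cardGr1 card_E; lia. Qed.

Lemma Gr_0 r : ('X - 0%:P) ^+ 1 %| char_poly (lap (Gr r)).
Proof.
have H : (0 < 2 * r + 1)%N by lia.
apply: (@eig_div (Gr r) 1 (fun _ => fun _ => 1) (fun _ => inr (ev H 0))).
- by move=> _ /=; apply: eig_ones; apply: sym_Gr.
- by move=> i i'; rewrite (ord1 i) (ord1 i').
- by move=> _; apply: oner_neq0.
Qed.

Lemma Gr_n r : ('X - (4 * r + 4)%:R%:P) ^+ 1 %| char_poly (lap (Gr r)).
Proof.
have H : (0 < 2 * r + 1)%N by lia.
apply: (@eig_div (Gr r) 1 (fun _ => sumf (fun _ => #|E (2 * r + 1)|%:R)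
       (fun _ => - #|gunion (K 2) (E (2 * r + 1))|%:R)) (fun _ => inr (ev H 0))).
- move=> _ /=; apply: eig_eq; first apply: eig_joinc.
  + by apply: sym_union; [apply: sym_K| apply: sym_copies; apply: sym_K].
  + by apply: sym_copies; apply: sym_K.
  by rewrite -natrD cardGr1 card_E; congr (_%:R); lia.
- by move=> i i'; rewrite (ord1 i) (ord1 i').
- by move=> _ /=; rewrite oppr_eq0 pnatr_eq0 cardGr1; lia.
Qed.

Lemma Gr_a r : ('X - (2 * r + 3)%:R%:P) ^+ (2 * r + 1) %| char_poly (lap (Gr r)).
Proof.
have H : (0 < 2 * r + 1)%N by lia.
pose k0 : 'I_2 := ord0; pose k1 : 'I_2 := ord_max.
pose fs (i : 'I_(2 * r + 1)) : Gr r -> algC :=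
  if (i == 0 :> nat) then sumf (sumf (tw k0 k1) (fun _ => 0)) (fun _ => 0)
  else sumf (fun _ => 0) (tw (ev H i) (ev H 0)).
pose xs (i : 'I_(2 * r + 1)) : Gr r :=
  if (i == 0 :> nat) then inl (inl k0) else inr (ev H i).
apply: (@eig_div (Gr r) _ fs xs).
- move=> i; rewrite /fs; case: ifP => _.
  + apply: eig_eq; first apply: eig_joinl.
    * apply: eig_union; [apply: eig_K; exact: sum_tw | exact: eig_zero].
    * by rewrite sum_sumf sum_tw sumc mul0r addr0.
    * by rewrite card_E -natrD; congr _%:R; lia.
  + apply: eig_eq; first apply: eig_joinr.
    * by apply: eig_empty => u v; exact: noadjE.
    * exact: sum_tw.
    * by rewrite cardGr1 add0r.
- move=> i i' lt; rewrite /fs /xs.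
  have -> : (i' == 0 :> nat) = false by apply/negbTE; rewrite -lt0n; lia.
  case: ifP => // i0 /=; rewrite /tw !ev_eq //.
  have -> : (i' == i :> nat) = false by apply/negbTE; lia.
  have -> : (i' == 0 :> nat) = false by apply/negbTE; rewrite -lt0n; lia.
  by rewrite subrr.
- move=> i; rewrite /fs /xs; case: ifP => i0 /=; rewrite /tw eqxx.
    by rewrite /k0 /k1 /= subr0 oner_neq0.
  by rewrite ev_eq // i0 subr0 oner_neq0.
Qed.

Lemma Gr_b r : ('X - (2 * r + 1)%:R%:P) ^+ (2 * r + 1) %| char_poly (lap (Gr r)).
Proof.
have H : (0 < 2 * r + 1)%N by lia.
pose k0 : 'I_2 := ord0.
pose fs (i : 'I_(2 * r + 1)) : Gr r -> algC :=
  if (i == 0 :> nat) then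
    sumf (sumf (fun _ => 1) (fun u => -2 * (u == ev H 0)%:R)) (fun _ => 0)
  else sumf (sumf (fun _ => 0) (tw (ev H i) (ev H 0))) (fun _ => 0).
pose xs (i : 'I_(2 * r + 1)) : Gr r :=
  if (i == 0 :> nat) then inl (inl k0) else inl (inr (ev H i)).
apply: (@eig_div (Gr r) _ fs xs).
- move=> i; rewrite /fs; case: ifP => _.
  + apply: eig_eq; first apply: eig_joinl.
    * apply: eig_union; first by apply: eig_ones; apply: sym_K.
      by apply: eig_empty => u v; exact: noadjE.
    * rewrite sum_sumf sum1 card_K -mulr_sumr sum_e mulr1.
      by apply/eqP; rewrite subr_eq0.
    * by rewrite card_E add0r.
  + apply: eig_eq; first apply: eig_joinl.
    * apply: eig_union; first exact: eig_zero.
      by apply: eig_empty => u v; exact: noadjE.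
    * by rewrite sum_sumf sum_tw sumc mul0r addr0.
    * by rewrite card_E add0r.
- move=> i i' lt; rewrite /fs /xs.
  have -> : (i' == 0 :> nat) = false by apply/negbTE; rewrite -lt0n; lia.
  case: ifP => i0 /=.
    rewrite ev_eq //.
    have -> : (i' == 0 :> nat) = false by apply/negbTE; rewrite -lt0n; lia.
    by rewrite mulr0.
  rewrite /tw !ev_eq //.
  have -> : (i' == i :> nat) = false by apply/negbTE; lia.
  have -> : (i' == 0 :> nat) = false by apply/negbTE; rewrite -lt0n; lia.
  by rewrite subrr.
- move=> i; rewrite /fs /xs; case: ifP => i0 /=; first exact: oner_neq0.
  by rewrite /tw eqxx ev_eq // i0 subr0 oner_neq0.
Qed.

Lemma char_Gr r :
  char_poly (lap (Gr r)) = \prod_(z <- mspec (lGr r)) ('X - z%:P).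
Proof.
apply: char_spec.
- rewrite /= !inE -[0 : algC]/(0%:R) !eqr_nat !negb_or.
  by rewrite andbT; repeat (apply/andP; split); apply/eqP; lia.
- move=> p; rewrite !inE => /or4P [] /eqP -> /=.
  + exact: Gr_0.
  + exact: Gr_n.
  + exact: Gr_a.
  + exact: Gr_b.
- by rewrite /mspec /= !size_cat !size_nseq cardGr /=; lia.
Qed.

Definition lK m : seq (algC * nat) := [:: (0, 1%N); (m%:R, m.-1)].

Lemma pv_eq m (u0 : 'I_m) j j' : (j < m)%N -> (j' < m)%N ->
  (insubd u0 j == insubd u0 j') = (j == j').
Proof. by move=> hj hj'; rewrite -val_eqE /= !val_insubd hj hj'. Qed.

Lemma char_K m : (0 < m)%N ->
  char_poly (lap (K m)) = \prod_(z <- mspec (lK m)) ('X - z%:P).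
Proof.
move=> H.
pose pv (j : nat) : 'I_m := insubd (Ordinal H) j.
apply: char_spec.
- by rewrite /= !inE -[0 : algC]/(0%:R) eqr_nat andbT; apply/eqP; lia.
- move=> p; rewrite !inE => /orP [] /eqP -> /=.
  + apply: (@eig_div (K m) 1 (fun _ => fun _ => 1) (fun _ => pv 0)).
    * by move=> _ /=; apply: eig_ones; apply: sym_K.
    * by move=> i i'; rewrite (ord1 i) (ord1 i').
    * by move=> _; apply: oner_neq0.
  + apply: (@eig_div (K m) m.-1 (fun i => tw (pv i.+1) (pv 0)) (fun i => pv i.+1)).
    * by move=> i /=; apply: eig_K; apply: sum_tw.
    * move=> i i' lt /=; have hi := ltn_ord i; have hi' := ltn_ord i'.
      rewrite /tw !pv_eq //; try lia.
      have -> : (i'.+1 == i.+1) = false by apply/negbTE; lia.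
      by rewrite subrr.
    * move=> i /=; have hi := ltn_ord i.
      by rewrite /tw eqxx pv_eq //; try lia; rewrite subr0 oner_neq0.
- by rewrite /mspec /= !size_cat !size_nseq card_K /=; lia.
Qed.

Definition Gp r := gjoin (gjoin (E (2 * r + 1)) (E (2 * r + 2))) (K 1).

Definition lGp r : seq (algC * nat) :=
  [:: (0, 1%N); ((4 * r + 4)%:R, 2%N); ((2 * r + 3)%:R, (2 * r)%N);
      ((2 * r + 2)%:R, (2 * r + 1)%N)].

Lemma symE m : symg (E m).
Proof. by apply: sym_copies; apply: sym_K. Qed.

Lemma cardGp1 r : #|gjoin (E (2 * r + 1)) (E (2 * r + 2))| = (4 * r + 3)%N.
Proof. by rewrite card_join !card_E; lia. Qed.

Lemma cardGp r : #|Gp r| = (4 * r + 4)%N.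
Proof. by rewrite card_join cardGp1 card_K; lia. Qed.

Lemma char_Gp r :
  char_poly (lap (Gp r)) = \prod_(z <- mspec (lGp r)) ('X - z%:P).
Proof.
have HP : (0 < 2 * r + 1)%N by lia.
have HQ : (0 < 2 * r + 2)%N by lia.
apply: char_spec.
- rewrite /= !inE -[0 : algC]/(0%:R) !eqr_nat !negb_or.
  by rewrite andbT; repeat (apply/andP; split); apply/eqP; lia.
- move=> p; rewrite !inE => /or4P [] /eqP -> /=.
  + apply: (@eig_div (Gp r) 1 (fun _ => fun _ => 1) (fun _ => inr ord0)).
    * move=> _ /=; apply: eig_ones.
      by apply: sym_join; [apply: sym_join; apply: symE|apply: sym_K].
    * by move=> i i'; rewrite (ord1 i) (ord1 i').
    * by move=> _; apply: oner_neq0.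
  + pose fs (i : 'I_2) : Gp r -> algC :=
      if (i == 0 :> nat) then
        sumf (sumf (fun _ => #|E (2 * r + 2)|%:R) (fun _ => - #|E (2 * r + 1)|%:R))
             (fun _ => 0)
      else sumf (fun _ => #|K 1|%:R)
                (fun _ => - #|gjoin (E (2 * r + 1)) (E (2 * r + 2))|%:R).
    pose xs (i : 'I_2) : Gp r :=
      if (i == 0 :> nat) then inl (inl (ev HP 0)) else inr ord0.
    apply: (@eig_div (Gp r) 2 fs xs).
    * move=> i; rewrite /fs; case: ifP => _.
      - apply: eig_eq; first apply: eig_joinl.
        + by apply: eig_joinc; apply: symE.
        + by rewrite sum_sumf !sumc; ring.
        + by rewrite -!natrD !card_E card_K; congr _%:R; lia.
      - apply: eig_eq; first apply: eig_joinc.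
        + by apply: sym_join; apply: symE.
        + exact: sym_K.
        + by rewrite -!natrD cardGp1 card_K; congr _%:R; lia.
    * move=> i i' lt; rewrite /fs /xs.
      have -> : (i' == 0 :> nat) = false by apply/negbTE; rewrite -lt0n; lia.
      by have -> : (i == 0 :> nat) by rewrite -leqn0; have := ltn_ord i'; lia.
    * move=> i; rewrite /fs /xs; case: ifP => _ /=.
        by rewrite card_E pnatr_eq0; lia.
      by rewrite oppr_eq0 pnatr_eq0 cardGp1; lia.
  + pose fs (i : 'I_(2 * r)) : Gp r -> algC :=
      sumf (sumf (tw (ev HP i.+1) (ev HP 0)) (fun _ => 0)) (fun _ => 0).
    pose xs (i : 'I_(2 * r)) : Gp r := inl (inl (ev HP i.+1)).
    apply: (@eig_div (Gp r) _ fs xs).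
    * move=> i; apply: eig_eq; first apply: eig_joinl.
      - apply: eig_joinl; first by apply: eig_empty => u v; exact: noadjE.
        exact: sum_tw.
      - by rewrite sum_sumf sum_tw sumc mul0r addr0.
      - by rewrite add0r -natrD card_E card_K; congr _%:R; lia.
    * move=> i i' lt; have hi := ltn_ord i; have hi' := ltn_ord i'.
      rewrite /fs /xs /= /tw !ev_eq //; try lia.
      have -> : (i'.+1 == i.+1) = false by apply/negbTE; lia.
      by rewrite subrr.
    * move=> i; have hi := ltn_ord i.
      by rewrite /fs /xs /= /tw eqxx ev_eq //; try lia; rewrite subr0 oner_neq0.
  + pose fs (i : 'I_(2 * r + 1)) : Gp r -> algC :=
      sumf (sumf (fun _ => 0) (tw (ev HQ i.+1) (ev HQ 0))) (fun _ => 0).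
    pose xs (i : 'I_(2 * r + 1)) : Gp r := inl (inr (ev HQ i.+1)).
    apply: (@eig_div (Gp r) _ fs xs).
    * move=> i; apply: eig_eq; first apply: eig_joinl.
      - apply: eig_joinr; first by apply: eig_empty => u v; exact: noadjE.
        exact: sum_tw.
      - by rewrite sum_sumf sum_tw sumc mul0r add0r.
      - by rewrite add0r -natrD card_E card_K; congr _%:R; lia.
    * move=> i i' lt; have hi := ltn_ord i; have hi' := ltn_ord i'.
      rewrite /fs /xs /= /tw !ev_eq //; try lia.
      have -> : (i'.+1 == i.+1) = false by apply/negbTE; lia.
      by rewrite subrr.
    * move=> i; have hi := ltn_ord i.
      by rewrite /fs /xs /= /tw eqxx ev_eq //; try lia; rewrite subr0 oner_neq0.
- by rewrite /mspec /= !size_cat !size_nseq cardGp /=; lia.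
Qed.

Definition es (G : graph) : algC := \sum_(v : G) \sum_(u : G) (adj G v u)%:R.

Lemma avgdegE G : avgdeg G = es G / #|G|%:R.
Proof.
rewrite /avgdeg natr_sum /es; congr (_ / _); apply: eq_bigr => v _; exact: degE.
Qed.

Lemma es_join G1 G2 :
  es (gjoin G1 G2) = es G1 + es G2 + 2 * #|G1|%:R * #|G2|%:R.
Proof.
rewrite /es big_sumType /=.
under eq_bigr => a _ do rewrite big_sumType /= sum1.
under [X in _ + X]eq_bigr => b _ do rewrite big_sumType /= sum1.
rewrite !big_split /= !sumc -/(es G1) -/(es G2).
move: (es G1) (es G2) (#|G1|%:R : algC) (#|G2|%:R : algC) => a b c d; ring.
Qed.

Lemma es_union G1 G2 : es (gunion G1 G2) = es G1 + es G2.
Proof.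
rewrite /es big_sumType /=.
under eq_bigr => a _ do rewrite big_sumType /= big1_eq addr0.
by under [X in _ + X]eq_bigr => b _ do rewrite big_sumType /= big1_eq add0r.
Qed.

Lemma es_E m : es (E m) = 0.
Proof. by rewrite /es big1 // => v _; rewrite big1 // => u _; rewrite noadjE. Qed.

Lemma es_K m : es (K m) = m%:R * (m.-1)%:R.
Proof.
rewrite /es (eq_bigr (fun _ => (m.-1)%:R)); first by rewrite sumc card_K mulrC.
move=> v _ /=.
rewrite (bigD1 v) //= eqxx add0r.
rewrite (eq_bigr (fun _ => 1)); last by move=> i; rewrite eq_sym => ->.
by rewrite sumr_const cardC1 card_ord.
Qed.

Lemma sum_mspec (F : algC -> algC) l :
  \sum_(z <- mspec l) F z = \sum_(p <- l) F p.1 *+ p.2.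
Proof.
elim: l => [|p l IH]; first by rewrite /mspec /= !big_nil.
rewrite /mspec /= big_cat -/(mspec l) IH big_cons; congr (_ + _).
by rewrite big_nseq; elim: p.2 => //= k ->; rewrite mulrS.
Qed.

Lemma LE_eq G l : char_poly (lap G) = \prod_(z <- mspec l) ('X - z%:P) ->
  LE G = \sum_(p <- l) `|p.1 - avgdeg G| *+ p.2.
Proof.
move=> h; rewrite /LE (perm_big _ (lspec_perm h)) sum_mspec //.
Qed.

Lemma nat_dist a b : (b <= a)%N -> `|a%:R - b%:R| = (a - b)%:R :> algC.
Proof. by move=> h; rewrite -natrB // normr_nat. Qed.

Lemma natMn a k : (a%:R : algC) *+ k = (a * k)%:R.
Proof. by rewrite natrM mulr_natr. Qed.

Lemma LE_Kn r : LE (K (4 * r + 4)) = (8 * r + 6)%:R.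
Proof.
have m0 : (0 < 4 * r + 4)%N by lia.
have e1 : (4 * r + 4).-1 = (4 * r + 3)%N by lia.
have hd : avgdeg (K (4 * r + 4)) = (4 * r + 3)%:R.
  rewrite avgdegE es_K card_K e1 mulrC mulKf // pnatr_eq0; lia.
rewrite (LE_eq (char_K m0)) /= !big_cons big_nil hd e1 addr0 sub0r normrN.
rewrite normr_nat nat_dist; last by lia.
by rewrite !natMn -natrD; congr _%:R; rewrite /=; lia.
Qed.

Lemma LE_Gr r : LE (Gr r) = (8 * r + 6)%:R.
Proof.
have hd : avgdeg (Gr r) = (2 * r + 2)%:R.
  rewrite avgdegE /Gr es_join es_union es_K !es_E cardGr1 card_E cardGr.
  have -> : 2%:R * (2.-1)%:R + 0 + 0 + 2 * (2 * r + 3)%:R * (2 * r + 1)%:R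
            = (2 * r + 2)%:R * (4 * r + 4)%:R :> algC.
    by rewrite !natrD /=; ring.
  by rewrite mulfK // pnatr_eq0; lia.
rewrite (LE_eq (char_Gr r)) /= !big_cons big_nil hd addr0 sub0r normrN normr_nat.
rewrite nat_dist; last by lia.
rewrite nat_dist; last by lia.
rewrite distrC nat_dist; last by lia.
by rewrite !natMn -!natrD; congr _%:R; rewrite /=; lia.
Qed.

Lemma LE_Gp r : LE (Gp r) = (8 * r + 6)%:R.
Proof.
set q : algC := ((2 * r + 2)%:R)^-1.
have hd : avgdeg (Gp r) = (2 * r + 3)%:R - q.
  rewrite avgdegE /Gp es_join es_join !es_E es_K cardGp1 !card_E card_K cardGp /q.
  have h1 : (2 * r + 2)%:R != 0 :> algC by rewrite pnatr_eq0; lia.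
  have h2 : (4 * r + 4)%:R = 2 * (2 * r + 2)%:R :> algC.
    by rewrite !natrD /=; ring.
  rewrite h2; move: h1; rewrite !natrD /= addr0 => h1; field => //.
have hq0 : 0 <= q by rewrite invr_ge0 ler0n.
have hq1 : q <= 1.
  by rewrite invf_le1 ?ltr0n ?ler1n; lia.
have hd0 : 0 <= (2 * r + 3)%:R - q.
  by rewrite subr_ge0 (le_trans hq1) // ler1n; lia.
have t2 : (4 * r + 4)%:R - ((2 * r + 3)%:R - q) = (2 * r + 1)%:R + q :> algC.
  by rewrite !natrD /=; ring.
have t3 : (2 * r + 3)%:R - ((2 * r + 3)%:R - q) = q :> algC.
  by ring.
have t4 : (2 * r + 2)%:R - ((2 * r + 3)%:R - q) = q - 1 :> algC.
  by rewrite !natrD /=; ring.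
rewrite (LE_eq (char_Gp r)) /= !big_cons big_nil hd addr0 sub0r normrN.
rewrite t2 t3 t4 (ger0_norm hd0) (ger0_norm hq0) ger0_norm ?addr_ge0 ?ler0n //.
rewrite ler0_norm ?subr_le0 //.
have hc : (r%:R + r%:R + 2 : algC) != 0.
  by rewrite -natrD -[2]/(2%:R) -natrD pnatr_eq0; lia.
by rewrite /q !natrD /=; field.
Qed.

Lemma main_aux (r : nat) (hr : (1 <= r)%N) :
  [/\ #|Gr r| = (4 * r + 4)%N, #|Gp r| = (4 * r + 4)%N,
      LE (Gr r) = LE (K (4 * r + 4)), LE (Gp r) = LE (K (4 * r + 4))
    & LE (K (4 * r + 4)) = (8 * r + 6)%:R ] /\
  ~ perm_eq (lspec (Gr r)) (lspec (K (4 * r + 4))) /\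
  ~ perm_eq (lspec (Gp r)) (lspec (K (4 * r + 4))).
Proof.
have m0 : (0 < 4 * r + 4)%N by lia.
have pK := lspec_perm (char_K m0).
have notK : forall a, (0 < a)%N -> (a < 4 * r + 4)%N ->
    a%:R \notin mspec (lK (4 * r + 4)).
  move=> a a0 a1; rewrite /mspec /= !inE cats0 mem_nseq pnatr_eq0 eqr_nat.
  by apply/negP => /orP [/eqP|/andP [_ /eqP]]; lia.
split; first by split; rewrite ?cardGr ?cardGp ?LE_Gr ?LE_Gp ?LE_Kn.
split.
- move=> hp.
  have p1 : perm_eq (mspec (lGr r)) (mspec (lK (4 * r + 4))).
    by rewrite -(permPl (lspec_perm (char_Gr r))) -(permPr pK).
  have := perm_mem p1 ((2 * r + 1)%:R).
  rewrite (negbTE (notK _ _ _)); try lia.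
  rewrite /mspec /= !inE !mem_cat !mem_nseq eqxx andbT.
  have e : (0 < 2 * r + 1)%N by lia.
  by rewrite e /= !orbT.
- move=> hp.
  have p1 : perm_eq (mspec (lGp r)) (mspec (lK (4 * r + 4))).
    by rewrite -(permPl (lspec_perm (char_Gp r))) -(permPr pK).
  have := perm_mem p1 ((2 * r + 2)%:R).
  rewrite (negbTE (notK _ _ _)); try lia.
  rewrite /mspec /= !inE !mem_cat !mem_nseq eqxx andbT.
  have e : (0 < 2 * r + 1)%N by lia.
  by rewrite e /= !orbT.
Qed.

Theorem theorem4 (r : nat) (hr : (1 <= r)%N) :
  let Gr := gjoin (gunion (K 2) (copies (2 * r + 1) (K 1)))
                  (copies (2 * r + 1) (K 1)) in
  let G'r := gjoin (gjoin (copies (2 * r + 1) (K 1)) (copies (2 * r + 2) (K 1)))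
                   (K 1) in
  let Kn := K (4 * r + 4) in
  [/\ #|Gr| = (4 * r + 4)%N, #|G'r| = (4 * r + 4)%N,
      LE Gr = LE Kn, LE G'r = LE Kn & LE Kn = (8 * r + 6)%:R ] /\
  ~ perm_eq (lspec Gr) (lspec Kn) /\ ~ perm_eq (lspec G'r) (lspec Kn).
Proof. exact: (main_aux hr). Qed.
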